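(* Let $W$ be an $\epsilon$-spectral cluster of $G_0$, let $V\subseteq V_0$ be closed in $G_0$, let $G=G_0|V$, and let $S\subseteq V$ be closed in $G$ and dominate $W$. Suppose $v\in S$ has $d_G(v)>0$ and at least $\frac59 d_G(v)$ of its $G$-neighbors in $V\setminus S$. Then $S\setminus\{v\}$ is closed in $G$ and dominates $W$. Consequently, performing any sequence of such moves (local improvements of $V\setminus S$) preserves that $S$ is closed in $G$ and dominates $W$.
   Context: Standing setting: $G_0=(V_0,E_0)$ is a finite simple undirected graph and $0<\epsilon\le 1/2000000$. For a graph $H$, $d_H(v)$ is the degree, $\mathrm{vol}_H(S)=\sum_{v\in S}d_H(v)$, $E(S,T)$ is the set of edges with one endpoint in $S$ and the other in $T$, $\partial_H S=E(S,V(H)\setminus S)$. For $V\subseteq V_0$, $G_0|V$ is the induced subgraph. An $\epsilon$-spectral cluster of $G_0$ is $W\subseteq V_0$ with $\mathrm{vol}_{G_0}(W)>0$, $|\partial_{G_0}W|\le\epsilon\,\mathrm{vol}_{G_0}(W)$, and for every $A\subseteq W$ with $r=\mathrm{vol}_{G_0}(A)/\mathrm{vol}_{G_0}(W)$, $|E(A,W\setminus A)|\ge(r(1-r)-\epsilon)\mathrm{vol}_{G_0}(W)$. A set $A\subseteq V(H)$ is closed in $H$ if no $v\in V(H)\setminus A$ with $d_H(v)>0$ has at least $\frac59 d_H(v)$ of its $H$-neighbors in $A$. A set $A\subseteq V_0$ dominates $W$ if $\mathrm{vol}_{G_0}(W\cap A)>(1-3\epsilon)\mathrm{vol}_{G_0}(W)$.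 *)

(* Defs.v *)
(* Graph G0 = (T, e): T finite vertex type (V0 = all of T),
   e symmetric irreflexive relation (finite simple undirected graph). *)
From HB Require Import structures.
From mathcomp Require Import all_boot all_order all_algebra.
Set Implicit Arguments. Unset Strict Implicit. Unset Printing Implicit Defensive.
Import Order.TTheory GRing.Theory Num.Theory.

Section Graph.
Variables (T : finType) (e : rel T).

Definition deg0 (v : T) : nat := #|[set u | e v u]|.

Definition vol0 (A : {set T}) : nat := \sum_(v in A) deg0 v.

Definition edges_between (S U : {set T}) : {set {set T}} :=
  [set D : {set T} | [exists x in S, exists y in U, e x y && (D == [set x; y])]].

Definition nedges (S U : {set T}) : nat := #|edges_between S U|.

Definition degH (V : {set T}) (v : T) : nat := #|[set u in V | e v u]|.

Definition nbrsIn (V A : {set T}) (v : T) : nat := #|[set u in V | (u \in A) && e v u]|.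

Definition closed_in (V A : {set T}) : Prop :=
  forall v, v \in V -> v \notin A -> (0 < degH V v)%N ->
    ~ (5 * degH V v <= 9 * nbrsIn V A v)%N.

Variable R : realFieldType.

Definition spectral_cluster (eps : R) (W : {set T}) : Prop :=
  [/\ (0 < vol0 W)%N,
      ((nedges W (~: W))%:R <= eps * (vol0 W)%:R)%R &
      forall A : {set T}, A \subset W ->
        let r := ((vol0 A)%:R / (vol0 W)%:R)%R in
        ((r * (1 - r) - eps) * (vol0 W)%:R <= (nedges A (W :\: A))%:R)%R].

Definition dominates (eps : R) (W A : {set T}) : Prop :=
  ((1 - 3 * eps) * (vol0 W)%:R < (vol0 (W :&: A))%:R)%R.

Definition move (V S S' : {set T}) : Prop :=
  exists2 v, v \in S &
    [/\ (0 < degH V v)%N, (5 * degH V v <= 9 * nbrsIn V (V :\: S) v)%N & S' = S :\ v].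

Inductive moves (V : {set T}) : {set T} -> {set T} -> Prop :=
| moves_refl S : moves V S S
| moves_step S S' S'' : move V S S' -> moves V S' S'' -> moves V S S''.

End Graph.

(* Main.v *)
Require Import Defs.
From HB Require Import structures.
From mathcomp Require Import all_boot all_order all_algebra.
From mathcomp Require Import zify lra.
Import Order.TTheory GRing.Theory Num.Theory.

Section Aux.
Variables (T : finType) (e : rel T).
Hypotheses (e_sym : symmetric e) (e_irr : irreflexive e).

Lemma nedges_le (X Y : {set T}) :
  (nedges e X Y <= \sum_(x in X) #|[set y in Y | e x y]|)%N.
Proof.
pose P : {set T * T} := [set p | [&& p.1 \in X, p.2 \in Y & e p.1 p.2]].
have sub : edges_between e X Y \subset [set [set p.1; p.2] | p in P].
  apply/subsetP => D; rewrite inE => /existsP[x /andP[xX /existsP[y /andP[yY /andP[exy /eqP ->]]]]].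
  by apply/imsetP; exists (x, y) => //; rewrite inE /= xX yY exy.
apply: leq_trans (subset_leq_card sub) _.
apply: leq_trans (leq_imset_card _ _) _.
rewrite -sum1_card (big_mkcond (fun p => p \in P)) /=.
have -> : (\sum_(i : T * T) (if i \in P then 1 else 0) =
   \sum_(x : T) \sum_(y : T) (if (x, y) \in P then 1 else 0))%N.
  by rewrite pair_big /=; apply: eq_bigr => -[x y] _.
rewrite [X in (_ <= X)%N](big_mkcond (fun x => x \in X)) /=.
apply: leq_sum => x _.
case xX: (x \in X); last first.
  by rewrite big1 // => y _; rewrite inE /= xX.
rewrite -sum1_card (big_mkcond (fun y => y \in [set y in Y | e x y])) /=.
apply: leq_sum => y _; rewrite !inE /= xX.
by [].
Qed.

Lemma nbrs_le_deg (V A : {set T}) u : (nbrsIn e V A u <= degH e V u)%N.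
Proof. by apply: subset_leq_card; apply/subsetP => y; rewrite !inE => /andP[-> /andP[_ ->]]. Qed.

Lemma degH_le (V : {set T}) u : (degH e V u <= deg0 e u)%N.
Proof. by apply: subset_leq_card; apply/subsetP => y; rewrite !inE => /andP[_ ->]. Qed.

Lemma nbrs_split (V S : {set T}) v :
  (nbrsIn e V (S :\ v) v + nbrsIn e V (V :\: S) v <= degH e V v)%N.
Proof.
rewrite /nbrsIn -cardsUI.
have -> : [set u in V | (u \in S :\ v) && e v u] :&: [set u in V | (u \in V :\: S) && e v u] = set0.
  apply/setP => y; rewrite !inE; by case: (y \in S); rewrite ?andbF.
rewrite cards0 addn0; apply: subset_leq_card; apply/subsetP => y; rewrite !inE.
by case/orP => /andP[-> /andP[_ ->]].
Qed.

Lemma closed_step (V S : {set T}) v : S \subset V -> closed_in e V S -> v \in S ->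
  (0 < degH e V v)%N -> (5 * degH e V v <= 9 * nbrsIn e V (V :\: S) v)%N ->
  closed_in e V (S :\ v).
Proof.
move=> hSV hS vS dp h5 u uV; rewrite in_setD1 negb_and negbK => /orP[/eqP-> | uS] dpu.
  have := nbrs_split V S v; lia.
have := hS u uV uS dpu.
have : (nbrsIn e V (S :\ v) u <= nbrsIn e V S u)%N.
  apply: subset_leq_card; apply/subsetP => y; rewrite !inE.
  by case/andP => -> /andP[/andP[_ ->] ->].
lia.
Qed.


Lemma closed_bound (V A : {set T}) x : closed_in e V A -> x \in V -> x \notin A ->
  (9 * nbrsIn e V A x <= 5 * degH e V x)%N.
Proof.
move=> hA xV xA; have := nbrs_le_deg V A x.
case: (posnP (degH e V x)) => [-> | dp]; first by lia.
have := hA x xV xA dp; lia.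
Qed.

Lemma dom_nat (V S W : {set T}) v :
  S \subset V -> closed_in e [set: T] V -> closed_in e V S -> v \in S -> v \in W ->
  (5 * degH e V v <= 9 * nbrsIn e V (V :\: S) v)%N ->
  [/\ vol0 e W = (vol0 e (W :&: (S :\ v)) + vol0 e (W :\: (S :\ v)))%N /\
      vol0 e W = (vol0 e (W :&: S) + vol0 e (W :\: S))%N,
      vol0 e (W :\: (S :\ v)) = (deg0 e v + vol0 e (W :\: S))%N,
      (5 * deg0 e v <= 9 * vol0 e (W :\: S) + 9 * nedges e W (~: W))%N,
      W :\: (S :\ v) \subset W &
      (9 * nedges e (W :\: (S :\ v)) (W :\: (W :\: (S :\ v)))
         <= 5 * vol0 e (W :\: (S :\ v)))%N].
Proof.
move=> hSV hV hS vS vW h5.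
set C := W :&: (S :\ v); set B := W :\: S; set D := W :\: (S :\ v).
have vV : v \in V by apply: (subsetP hSV).
have hD : D = v |: B.
  apply/setP => y; rewrite !inE; case: (eqVneq y v) => [-> | ] /=; first by rewrite vW.
  by [].
have vB : v \notin B by rewrite !inE vS.
have hWD : W :\: D = C.
  by apply/setP => y; rewrite !inE; case: (y \in W); rewrite ?andbT ?andbF // negbK.
have kv : (9 * #|[set y in C | e v y]| <= 4 * deg0 e v)%N.
  have h1 : (#|[set y in C | e v y]| <= nbrsIn e V (S :\ v) v)%N.
    apply: subset_leq_card; apply/subsetP => y; rewrite !inE.
    case/andP => /andP[_ /andP[yv yS]] ->; rewrite yv yS andbT /=.
    by rewrite andbT (subsetP hSV).
  have := nbrs_split V S v; have := degH_le V v; lia.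
split.
- split; first by rewrite /vol0 (big_setID (S :\ v)).
  by rewrite /vol0 (big_setID S).
- by rewrite hD /vol0 big_setU1.
- have hN : [set u | e v u] \subset
      ([set y in C | e v y] :|: [set y in B | e v y]) :|: [set y | e v y & y \notin W].
    apply/subsetP => y; rewrite !inE => evy; rewrite evy !andbT /=.
    have yv : y != v by apply/eqP => yv; move: evy; rewrite yv e_irr.
    by rewrite yv /=; case: (y \in W); case: (y \in S).
  have c1 := subset_leq_card hN.
  have c2 := cardsU ([set y in C | e v y] :|: [set y in B | e v y]) [set y | e v y & y \notin W].
  have c3 := cardsU [set y in C | e v y] [set y in B | e v y].
  have c4 : (#|[set y in B | e v y]| <= vol0 e B)%N.
    rewrite -sum1_card /vol0 (big_setID [set y in B | e v y] (A := B)).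
    rewrite (setIidPr _); last by apply/subsetP => y; rewrite inE => /andP[].
    apply: leq_trans (leq_addr _ _); apply: leq_sum => y; rewrite inE => /andP[_ evy].
    by apply/card_gt0P; exists v; rewrite inE e_sym.
  have c5 : (#|[set y | e v y & y \notin W]| <= nedges e W (~: W))%N.
    rewrite -(card_in_imset (f := fun u => [set v; u])); last first.
      move=> x y; rewrite !inE => /andP[_ xW] /andP[_ yW] /= hxy.
      have : x \in [set v; y] by rewrite -hxy !inE eqxx orbT.
      rewrite !inE => /orP[/eqP xv | /eqP //]; by move: xW; rewrite xv vW.
    apply: subset_leq_card; apply/subsetP => D' /imsetP[y]; rewrite !inE => /andP[evy yW] ->.
    apply/existsP; exists v; rewrite vW /=; apply/existsP; exists y.
    by rewrite inE yW evy eqxx.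
  rewrite /deg0 in c1 kv *.
  lia.
- by apply/subsetP => y; rewrite inE => /andP[].
- rewrite hWD.
  apply: leq_trans (_ : 9 * \sum_(x in D) #|[set y in C | e x y]| <= _)%N.
    by rewrite leq_mul2l /= -hWD nedges_le.
  rewrite /vol0 !big_distrr /=; apply: leq_sum => x xD.
  case: (eqVneq x v) => [-> | xv]; first by have := kv; lia.
  move: xD; rewrite !inE xv /= => /andP[xS xW].
  case xV: (x \in V).
  + have := closed_bound V S x hS xV xS; have := degH_le V x.
    have : (#|[set y in C | e x y]| <= nbrsIn e V S x)%N.
      apply: subset_leq_card; apply/subsetP => y; rewrite !inE.
      case/andP => /andP[_ /andP[_ yS]] ->; by rewrite yS (subsetP hSV _ yS).
    lia.
  + have xT : x \in [set: T] by rewrite inE.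
    have := closed_bound [set: T] V x hV xT (negbT xV).
    have -> : degH e [set: T] x = deg0 e x.
      by apply: eq_card => y; rewrite !inE.
    have : (#|[set y in C | e x y]| <= nbrsIn e [set: T] V x)%N.
      apply: subset_leq_card; apply/subsetP => y; rewrite !inE.
      case/andP => /andP[_ /andP[_ yS]] ->; rewrite (subsetP hSV _ yS) andbT.
      by [].
    lia.
Qed.

End Aux.
Section RealS.
Local Open Scope ring_scope.
Lemma real_fact (R : realFieldType) (eps X b d Dv E n : R) :
  0 < eps -> eps <= 1 / 100 -> 0 < X -> 0 <= b -> 0 <= d -> 0 <= n ->
  Dv = d + b -> 5 * d <= 9 * b + 9 * n -> n <= eps * X ->
  (1 - 3 * eps) * X < X - b ->
  ((Dv / X) * (1 - Dv / X) - eps) * X <= E -> 9 * E <= 5 * Dv ->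
  (1 - 3 * eps) * X < X - Dv.
Proof.
move=> ep e1 Xp b0 d0 n0 hD h5 hn hb hs hE.
set y := Dv / X in hs.
have hDv : Dv = y * X by rewrite /y mulfVK // gt_eqF.
have y0 : 0 <= y by rewrite /y divr_ge0 // ?hD; lra.
have bl : b < 3 * eps * X by nra.
have yl : y * X < 11 * eps * X by nra.
have yl' : y < 11 * eps by rewrite -(ltr_pM2r Xp).
have h1 : (y * (1 - y) - eps) * X <= 5 / 9 * y * X by nra.
have h2 : y * (1 - y) - eps <= 5 / 9 * y by rewrite -(ler_pM2r Xp).
have h3 : y < 3 * eps by nra.
rewrite hDv; nra.
Qed.
End RealS.


Lemma t100 : (100 <= 2000000)%N. Proof. vm_compute. reflexivity. Qed.

Lemma eps100 (R : realFieldType) (eps : R) : (eps <= 1 / 2000000%:R)%R -> (eps <= 1 / 100%:R)%R.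
Proof.
move=> h; apply: (le_trans h).
rewrite !mul1r lef_pV2 ?posrE ?ltr0n // ler_nat. exact: t100.
Qed.

Lemma step (R : realFieldType) (T : finType) (e : rel T)
  (e_sym : symmetric e) (e_irr : irreflexive e)
  (eps : R) (eps_pos : (0 < eps)%R) (eps_small : (eps <= 1 / 2000000%:R)%R)
  (W V S : {set T})
  (hW : spectral_cluster e eps W)
  (hV : closed_in e [set: T] V)
  (hSV : S \subset V)
  (hS : closed_in e V S)
  (hdom : dominates e eps W S) v :
  v \in S -> (0 < degH e V v)%N ->
     (5 * degH e V v <= 9 * nbrsIn e V (V :\: S) v)%N ->
     closed_in e V (S :\ v) /\ dominates e eps W (S :\ v).
Proof.
move=> vS dp h5; split; first exact: closed_step.
case vW: (v \in W); last first.
  rewrite /dominates.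
  have -> : W :&: (S :\ v) = W :&: S.
    by apply/setP => y; rewrite !inE; case: (eqVneq y v) => [-> |]; rewrite ?vW.
  exact: hdom.
have [[eW1 eW2] eD hd sD hE] := @dom_nat T e e_sym e_irr V S W v hSV hV hS vS vW h5.
case: hW => Wp hb hsp.
have := hsp _ sD => /= hs.
rewrite /dominates in hdom *.
have e1 := @eps100 R eps eps_small.
have Xp : (0 < (vol0 e W)%:R :> R)%R by rewrite ltr0n.
have -> : ((vol0 e (W :&: (S :\ v)))%:R = (vol0 e W)%:R - (vol0 e (W :\: (S :\ v)))%:R :> R)%R.
  by rewrite eW1 natrD addrK.
apply: (@real_fact R eps (vol0 e W)%:R (vol0 e (W :\: S))%:R (deg0 e v)%:R
   (vol0 e (W :\: (S :\ v)))%:R (nedges e (W :\: (S :\ v)) (W :\: (W :\: (S :\ v))))%:R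
   (nedges e W (~: W))%:R) => //.
- by rewrite eD natrD.
- by rewrite -[5%R]/((5%:R)%R) -[9%R]/((9%:R)%R) -!natrM -natrD ler_nat.
- have -> : ((vol0 e W)%:R - (vol0 e (W :\: S))%:R = (vol0 e (W :&: S))%:R :> R)%R by rewrite eW2 natrD addrK.
  exact: hdom.
- by rewrite -[5%R]/((5%:R)%R) -[9%R]/((9%:R)%R) -!natrM ler_nat.
Qed.

Theorem mainTheorem11 (R : realFieldType) (T : finType) (e : rel T)
  (e_sym : symmetric e) (e_irr : irreflexive e)
  (eps : R) (eps_pos : (0 < eps)%R) (eps_small : (eps <= 1 / 2000000%:R)%R)
  (W V S : {set T})
  (hW : spectral_cluster e eps W)
  (hV : closed_in e [set: T] V)
  (hSV : S \subset V)
  (hS : closed_in e V S)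
  (hdom : dominates e eps W S) :
  (forall v, v \in S -> (0 < degH e V v)%N ->
     (5 * degH e V v <= 9 * nbrsIn e V (V :\: S) v)%N ->
     closed_in e V (S :\ v) /\ dominates e eps W (S :\ v))
  /\
  (forall S', moves e V S S' -> closed_in e V S' /\ dominates e eps W S').
Proof.
split; first by move=> v; apply: step.
move=> S' hm; elim: hm hSV hS hdom => [S0 | S0 S1 S2 [v vS [dp h5 ->]] _ IH] hSV0 hS0 hdom0.
  by split.
have [c d] := @step R T e e_sym e_irr eps eps_pos eps_small W V S0 hW hV hSV0 hS0 hdom0 v vS dp h5.
apply: IH => //.
by apply: subset_trans hSV0; apply: subD1set.
Qed.
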